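(* Let $\mathcal C$ be a concept hierarchy, $r_1,r_2,\epsilon\in[0,1]$, $a>0$ a real with $r_1\le ar_2(1-\epsilon)$, $m$ a positive integer, and let $\mathcal L$ be the network defined below with fixed sets $F$ and $E$ satisfying the stated constraints. Then for every $B\subseteq C_0$ presented at time 0 and every concept $c$ with $c\notin supp_{r_1}(B)$, no neuron $v\in reps(c)$ fires at time $level(c)$.
   Context: Concept hierarchies: fix positive integers $\ell_{max},n,k$. A universal set $D$ of concepts is partitioned into disjoint sets $D_0,\dots,D_{\ell_{max}}$ with $|D_0|=n$; $level(c)=\ell$ for $c\in D_\ell$. A concept hierarchy $\mathcal C$ consists of $C\subseteq D$, with $C_\ell=C\cap D_\ell$, and for each $c\in C_\ell$ with $1\le\ell\le\ell_{max}$ a set $children(c)\subseteq C_{\ell-1}$, such that $|C_{\ell_{max}}|=k$, $|children(c)|=k$ for all such $c$, and $children(c)\cap children(c')=\emptyset$ for distinct $c,c'\in C_\ell$. For $B\subseteq D_0$ and $r\in[0,1]$: $B(0)=B\cap C_0$; for $1\le\ell\le\ell_{max}$, $B(\ell)=\{c\in C_\ell:|children(c)\cap B(\ell-1)|\ge rk\}$; $supp_r(B)=\bigcup_{\ell}B(\ell)$. Network $\mathcal L$: neurons partitioned into layers $N_0,\dots,N_{\ell_{max}}$. Each $c\in D_0$ has a set $reps(c)$ of $m$ neurons in $N_0$, each $c\in C$ with $level(c)\ge1$ a set $reps(c)$ of $m$ neurons in $N_{level(c)}$, all pairwise disjoint. $E$ is a set of pairs $(u,v)$ with $v\in reps(c)$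 and $u\in reps(c')$ for some child $c'$ of $c$; for $u\in N_{\ell-1}$, $v\in N_\ell$, $w(u,v)=1$ iff $(u,v)\in E$, else $0$. Threshold $\tau=ar_2km(1-\epsilon)$. A fixed set $F$ of neurons is failed (failed neurons never fire). Constraints: for every concept $c$, at least $m(1-\epsilon)$ neurons of $reps(c)$ are not in $F$; and for every $c$ with $level(c)\ge1$, every $v\in reps(c)$ and every child $c'$ of $c$, there are at least $am(1-\epsilon)$ neurons $u\in reps(c')\setminus F$ with $(u,v)\in E$. Input $B\subseteq C_0$ presented at time 0: a layer-0 neuron fires at time 0 iff it is in $\bigcup_{b\in B}reps(b)\setminus F$, and no layer-0 neuron fires at any other time. A non-failed $v\in N_\ell$, $\ell\ge1$, does not fire at time 0 and fires at time $t\ge1$ iff $\sum_{u\in N_{\ell-1}}w(u,v)x_u(t-1)\ge\tau$, where $x_u(s)\in\{0,1\}$ indicates whether $u$ fires at time $s$. *)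

(* Defs.v *)
From HB Require Import structures.
From mathcomp Require Import all_boot all_order all_algebra.
From mathcomp Require Import reals.
Set Implicit Arguments. Unset Strict Implicit. Unset Printing Implicit Defensive.
Import Order.TTheory GRing.Theory Num.Theory.
Local Open Scope ring_scope.

(* Concepts: a finite universal set D; level c = l means c \in D_l. *)
Definition has_reps (D : finType) (level : D -> nat) (C : {set D}) (c : D) : bool :=
  (level c == 0%N) || (c \in C).

Definition is_hierarchy (D : finType) (lmax n k : nat) (level : D -> nat)
  (C : {set D}) (children : D -> {set D}) : Prop :=
  [/\ forall c, (level c <= lmax)%N,
      #|[set c | level c == 0%N]| = n,
      #|[set c in C | level c == lmax]| = k,
      forall c, c \in C -> (1 <= level c)%N ->
        children c \subset [set c' in C | level c' == (level c).-1]
        /\ #|children c| = k &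
      forall c c', c \in C -> c' \in C -> (1 <= level c)%N ->
        level c = level c' -> c != c' -> [disjoint children c & children c']].

Fixpoint Blev (R : realType) (D : finType) (level : D -> nat) (C : {set D})
  (children : D -> {set D}) (k : nat) (r : R) (B : {set D}) (l : nat) : {set D} :=
  match l with
  | 0 => B :&: [set c in C | level c == 0%N]
  | l'.+1 => [set c in C | (level c == l'.+1) &&
               (r * k%:R <= #|children c :&: Blev level C children k r B l'|%:R)]
  end.

Definition supp (R : realType) (D : finType) (level : D -> nat) (C : {set D})
  (children : D -> {set D}) (k lmax : nat) (r : R) (B : {set D}) : {set D} :=
  \bigcup_(l < lmax.+1) Blev level C children k r B l.

(* The network structure: layers N_l = [set u | layer u == l],
   reps, and the edge set E (as a relation E u v : u -> v). *)
Definition is_network (D Nrn : finType) (lmax : nat) (level : D -> nat)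
  (C : {set D}) (children : D -> {set D}) (m : nat)
  (layer : Nrn -> nat) (reps : D -> {set Nrn}) (E : rel Nrn) : Prop :=
  [/\ forall u, (layer u <= lmax)%N,
      forall c, has_reps level C c ->
        #|reps c| = m /\ forall v, v \in reps c -> layer v = level c,
      forall c c', has_reps level C c -> has_reps level C c' -> c != c' ->
        [disjoint reps c & reps c'] &
      forall u v, E u v -> exists c c',
        [/\ c \in C, (1 <= level c)%N, v \in reps c, c' \in children c
          & u \in reps c']].

Definition failure_ok (R : realType) (D Nrn : finType) (level : D -> nat)
  (C : {set D}) (children : D -> {set D}) (m : nat)
  (reps : D -> {set Nrn}) (E : rel Nrn) (F : {set Nrn}) (a eps : R) : Prop :=
  (forall c, has_reps level C c -> m%:R * (1 - eps) <= #|reps c :\: F|%:R) /\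
  (forall c, c \in C -> (1 <= level c)%N -> forall v, v \in reps c ->
     forall c', c' \in children c ->
       a * m%:R * (1 - eps) <= #|[set u in reps c' :\: F | E u v]|%:R).

Definition weight (R : realType) (Nrn : finType) (E : rel Nrn) (u v : Nrn) : R :=
  if E u v then 1 else 0.

(* fires t v  <=>  x_v(t) = 1, for input B presented at time 0. *)
Fixpoint fires (R : realType) (D Nrn : finType) (layer : Nrn -> nat)
  (reps : D -> {set Nrn}) (B : {set D}) (F : {set Nrn}) (E : rel Nrn)
  (tau : R) (t : nat) : Nrn -> bool :=
  match t with
  | 0 => fun v => [&& layer v == 0%N, v \in \bigcup_(b in B) reps b & v \notin F]
  | t'.+1 => fun v => [&& layer v != 0%N, v \notin F &
       tau <= \sum_(u | layer u == (layer v).-1)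
                @weight R Nrn E u v * (if fires layer reps B F E tau t' u then 1 else 0)]
  end.

(* Main.v *)
Require Import Defs.
From HB Require Import structures.
From mathcomp Require Import all_boot all_order all_algebra.
From mathcomp Require Import reals.
From mathcomp Require Import ring.
Import Order.TTheory GRing.Theory Num.Theory.
Local Open Scope ring_scope.

Lemma card_bigcup_le_sum (I T : finType) (S : {set I}) (G : I -> {set T}) :
  (#|\bigcup_(i in S) G i| <= \sum_(i in S) #|G i|)%N.
Proof.
apply: (big_ind2 (fun (A : {set T}) (x : nat) => #|A| <= x)%N).
- by rewrite cards0.
- move=> A1 x1 A2 x2 h1 h2; apply: leq_trans (leq_card_setU _ _) _.
  exact: leq_add.
- by [].
Qed.

Theorem theorem8p4 (R : realType) (D Nrn : finType) (lmax n k : nat)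
  (level : D -> nat) (C : {set D}) (children : D -> {set D})
  (r1 r2 eps a : R) (m : nat)
  (layer : Nrn -> nat) (reps : D -> {set Nrn}) (E : rel Nrn) (F : {set Nrn}) :
  (0 < lmax)%N -> (0 < n)%N -> (0 < k)%N ->
  is_hierarchy lmax n k level C children ->
  0 <= r1 <= 1 -> 0 <= r2 <= 1 -> 0 <= eps <= 1 ->
  0 < a -> r1 <= a * r2 * (1 - eps) -> (0 < m)%N ->
  is_network lmax level C children m layer reps E ->
  failure_ok level C children m reps E F a eps ->
  forall B : {set D}, B \subset [set c in C | level c == 0%N] ->
  forall c : D, has_reps level C c ->
    c \notin supp level C children k lmax r1 B ->
    forall v, v \in reps c ->
      ~~ fires layer reps B F E (a * r2 * k%:R * m%:R * (1 - eps)) (level c) v.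
Proof.
move=> _ _ kpos [Hlev _ _ Hch _] _ _ _ _ Hr1 mpos [_ Hreps Hdisj HE] _ B HB.
set tau := a * r2 * k%:R * m%:R * (1 - eps).
have key : forall l c, has_reps level C c -> level c = l ->
    c \notin Blev level C children k r1 B l -> forall v, v \in reps c ->
    ~~ fires layer reps B F E tau l v.
  elim=> [|l IH] c0 hc0 lc0 nB v vc0.
    rewrite /=; apply/negP => /and3P[_ /bigcupP[b bB vb] _].
    have bc0 : b != c0.
      apply/eqP => eb; subst b; move: nB; rewrite /= inE bB /=.
      by move/subsetP: HB => /(_ _ bB) ->.
    have hb : has_reps level C b.
      by move/subsetP: HB => /(_ _ bB); rewrite inE /has_reps => /andP[-> ->]; rewrite orbT.
    by move: (Hdisj _ _ hb hc0 bc0) => /disjointFr; move=> /(_ _ vb); rewrite vc0.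
  have c0C : c0 \in C by move: hc0; rewrite /has_reps lc0 /=.
  have lv : layer v = l.+1 by rewrite (proj2 (Hreps _ hc0)) // lc0.
  set S := children c0 :&: Blev level C children k r1 B l.
  have hS : (#|S|%:R < r1 * k%:R :> R).
    move: nB; rewrite /= inE c0C lc0 eqxx /= -/S.
    by rewrite real_leNgt ?num_real // negbK.
  set U := \bigcup_(c' in S) reps c'.
  rewrite /=; apply/negP => /and3P[_ _]; rewrite lv /=.
  apply/negP; rewrite -real_ltNge ?num_real //.
  apply: (le_lt_trans (y := #|U|%:R)).
    rewrite -sumr_const big_mkcond /= [X in _ <= X]big_mkcond /=.
    apply: ler_sum => u _.
    case: ifP => lu; last by case: ifP.
    rewrite /weight; case: ifP => Euv; last by rewrite mul0r; case: ifP.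
    case: ifP => fu; last by rewrite mulr0; case: ifP.
    have [c1 [c' [c1C lc1 vc1 c'ch uc']]] := HE _ _ Euv.
    have ec1 : c1 = c0.
      apply/eqP; apply: contraT => ne.
      have hc1 : has_reps level C c1 by rewrite /has_reps c1C orbT.
      by rewrite (disjointFr (Hdisj _ _ hc1 hc0 ne) vc1) in vc0.
    subst c1.
    have [/subsetP sub _] := Hch _ c0C lc1.
    have := sub _ c'ch; rewrite inE => /andP[c'C /eqP lc'].
    have hc' : has_reps level C c' by rewrite /has_reps c'C orbT.
    case: ifP => uU; first by rewrite mulr1.
    exfalso.
    have c'nB : c' \notin Blev level C children k r1 B l.
      apply/negP => c'B; move/negbT: uU => /negP; apply.
      by apply/bigcupP; exists c' => //; rewrite inE c'ch.
    have := IH c' hc' _ c'nB u uc'; rewrite lc' lc0 /= => /(_ erefl).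
    by rewrite fu.
  apply: (le_lt_trans (y := (#|S| * m)%:R)).
    rewrite ler_nat /U; apply: leq_trans (@card_bigcup_le_sum _ _ S reps) _.
    rewrite -sum_nat_const; apply: leq_sum => c' c'S.
    have hc' : has_reps level C c'.
      move: c'S; rewrite inE => /andP[c'ch _].
      have [/subsetP sub _] := Hch _ c0C (ltac:(by rewrite lc0)).
      by move: (sub _ c'ch); rewrite inE /has_reps => /andP[-> _]; rewrite orbT.
    by rewrite (proj1 (Hreps _ hc')).
  rewrite natrM.
  have m0 : (0 : R) < m%:R by rewrite ltr0n.
  apply: (lt_le_trans (y := r1 * k%:R * m%:R)); first by rewrite ltr_pM2r.
  rewrite /tau.
  have -> : a * r2 * k%:R * m%:R * (1 - eps) = a * r2 * (1 - eps) * k%:R * m%:R.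
    by ring.
  by rewrite ler_pM2r // ler_pM2r // ltr0n.
move=> c hc ns v vc; apply: (key (level c) c hc erefl) => //.
apply: contra ns => cB; apply/bigcupP.
have lc : (level c < lmax.+1)%N by rewrite ltnS Hlev.
by exists (Ordinal lc).
Qed.
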